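(* Let $\mathbb{R}^n$ carry a norm $\|\cdot\|$ with dual norm $\|\cdot\|_*$, let $Q\subseteq\mathbb{R}^n$ be closed and convex, let $f_1,\dots,f_M$ be convex functions on $Q$, differentiable with $\|\nabla f_i(x)-\nabla f_i(y)\|_*\le L\|x-y\|$ for all $x,y\in Q$, and let $h$ be convex on $Q$. Put $f(x)=\max_{i=1,\dots,M}f_i(x)+h(x)$ and assume $f$ attains its minimum over $Q$ at $x_*$. Let $d$ be a prox-function on $Q$ with Bregman divergence $V$, $x_0\in Q$, $V(x_*,x_0)\le R^2$. Run the adaptive mirror triangle method for the minimax problem (described in the context) with starting point $x_0$, an integer $N\ge1$ of steps, and initial constant $L_0$ with $0<L_0\le L$. Then $$f(x_N)-f(x_* )\le\frac{8LR^2}{(N+1)^2}.$$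
   Context: $\|\lambda\|_*=\max_{\|\nu\|\le1}\langle\lambda,\nu\rangle$. A prox-function on $Q$ is a continuously differentiable $d:Q\to\mathbb{R}$, $1$-strongly convex w.r.t. $\|\cdot\|$; $V(x,y)=d(x)-d(y)-\langle\nabla d(y),x-y\rangle$. The adaptive method: set $y_0=u_0=x_0$, $L_1=L_0/2$, $\alpha_0=A_0=0$. Step $k+1$ ($k=0,\dots,N-1$), with current value $L_{k+1}$: (i) let $\alpha_{k+1}$ be the largest root of $A_k+\alpha=L_{k+1}\alpha^2$, and $A_{k+1}=A_k+\alpha_{k+1}$; (ii) $y_{k+1}=(\alpha_{k+1}u_k+A_kx_k)/A_{k+1}$; (iii) $u_{k+1}=\arg\min_{x\in Q}\{V(x,u_k)+\alpha_{k+1}(\max_{j}[f_j(y_{k+1})+\langle\nabla f_j(y_{k+1}),x-y_{k+1}\rangle]+h(x))\}$; (iv) $x_{k+1}=(\alpha_{k+1}u_{k+1}+A_kx_k)/A_{k+1}$; (v) if $f(x_{k+1})\le\max_j\{f_j(y_{k+1})+\langle\nabla f_j(y_{k+1}),x_{k+1}-y_{k+1}\rangle\}+\frac{L_{k+1}}{2}\|x_{k+1}-y_{k+1}\|^2+h(x_{k+1})$, set $L_{k+2}=L_{k+1}/2$ and go to the next step; otherwise replace $L_{k+1}$ by $2L_{k+1}$ and repeat step $k+1$ from (i). *)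

(* Defs.v *)
From HB Require Import structures.
From mathcomp Require Import all_boot all_order all_algebra.
From mathcomp Require Import all_classical all_reals all_analysis.
Set Implicit Arguments. Unset Strict Implicit. Unset Printing Implicit Defensive.
Import Order.TTheory GRing.Theory Num.Theory.
Import numFieldNormedType.Exports.
Local Open Scope classical_set_scope.
Local Open Scope ring_scope.

(* standard pairing <lambda, nu> on R^n (dual space identified with R^n) *)
Definition dotv (R : realType) (n : nat) (a b : 'rV[R]_n) : R :=
  \sum_(j < n) a 0 j * b 0 j.

Definition is_norm (R : realType) (n : nat) (nrm : 'rV[R]_n -> R) : Prop :=
  [/\ forall x, nrm x = 0 -> x = 0,
      forall (a : R) x, nrm (a *: x) = `|a| * nrm x
    & forall x y, nrm (x + y) <= nrm x + nrm y].

Definition dual_norm (R : realType) (n : nat) (nrm : 'rV[R]_n -> R)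
  (lam : 'rV[R]_n) : R :=
  sup [set dotv lam nu | nu in [set nu | nrm nu <= 1]].

Definition grad (R : realType) (n : nat) (f : 'rV[R]_n -> R) (x : 'rV[R]_n)
  : 'rV[R]_n := \row_(j < n) ('d f x) (delta_mx 0 j).

Definition convexR_set (R : realType) (n : nat) (Q : set 'rV[R]_n) : Prop :=
  forall x y (t : R), Q x -> Q y -> 0 <= t <= 1 -> Q (t *: x + (1 - t) *: y).

Definition convex_fun_on (R : realType) (n : nat) (Q : set 'rV[R]_n)
  (f : 'rV[R]_n -> R) : Prop :=
  forall x y (t : R), Q x -> Q y -> 0 <= t <= 1 ->
    f (t *: x + (1 - t) *: y) <= t * f x + (1 - t) * f y.

Definition strongly_convex1_on (R : realType) (n : nat) (nrm : 'rV[R]_n -> R)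
  (Q : set 'rV[R]_n) (d : 'rV[R]_n -> R) : Prop :=
  forall x y (t : R), Q x -> Q y -> 0 <= t <= 1 ->
    d (t *: x + (1 - t) *: y)
      <= t * d x + (1 - t) * d y - t * (1 - t) / 2 * nrm (x - y) ^+ 2.

Definition prox_function (R : realType) (n : nat) (nrm : 'rV[R]_n -> R)
  (Q : set 'rV[R]_n) (d : 'rV[R]_n -> R) : Prop :=
  [/\ forall x, Q x -> differentiable d x,
      {within Q, continuous (grad d)}
    & strongly_convex1_on nrm Q d].

Definition bregman (R : realType) (n : nat) (d : 'rV[R]_n -> R)
  (x y : 'rV[R]_n) : R := d x - d y - dotv (grad d y) (x - y).

Definition fmax (R : realType) (M : nat) (hM : (0 < M)%N) (g : 'I_M -> R) : R :=
  \big[Num.max/g (Ordinal hM)]_(i < M) g i.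

Definition fobj (R : realType) (n M : nat) (hM : (0 < M)%N)
  (fs : 'I_M -> 'rV[R]_n -> R) (h : 'rV[R]_n -> R) (x : 'rV[R]_n) : R :=
  fmax hM (fun i => fs i x) + h x.

Definition lin_model (R : realType) (n M : nat) (hM : (0 < M)%N)
  (fs : 'I_M -> 'rV[R]_n -> R) (y x : 'rV[R]_n) : R :=
  fmax hM (fun j => fs j y + dotv (grad (fs j) y) (x - y)).

(* One attempt of step k+1 with current constant Lc, from (A_k, x_k, u_k):
   produces alpha_{k+1}, y_{k+1}, u_{k+1}, x_{k+1} (steps (i)-(iv)). *)
Definition mtm_trial (R : realType) (n M : nat) (hM : (0 < M)%N)
  (fs : 'I_M -> 'rV[R]_n -> R) (h : 'rV[R]_n -> R) (d : 'rV[R]_n -> R)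
  (Q : set 'rV[R]_n) (Lc Ak : R) (xk uk : 'rV[R]_n)
  (a : R) (y u x : 'rV[R]_n) : Prop :=
  [/\
      Ak + a = Lc * a ^+ 2 /\ (forall b : R, Ak + b = Lc * b ^+ 2 -> b <= a),
      y = (Ak + a)^-1 *: (a *: uk + Ak *: xk),
      Q u /\ (forall z, Q z ->
        bregman d u uk + a * (lin_model hM fs y u + h u)
          <= bregman d z uk + a * (lin_model hM fs y z + h z))
    &
      x = (Ak + a)^-1 *: (a *: u + Ak *: xk)].

Definition mtm_accept (R : realType) (n M : nat) (hM : (0 < M)%N)
  (fs : 'I_M -> 'rV[R]_n -> R) (h : 'rV[R]_n -> R) (nrm : 'rV[R]_n -> R)
  (Lc : R) (y x : 'rV[R]_n) : Prop :=
  fobj hM fs h x <= lin_model hM fs y x + Lc / 2 * nrm (x - y) ^+ 2 + h x.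

(* Lacc k = accepted value of L_{k+1}; Lstart k = value of L_{k+1} at entry of
   step k+1 (L_1 = L_0/2, L_{k+2} = L_{k+1}/2); cnt k = number of doublings;
   every earlier attempt j < cnt k was computed and rejected. *)
Definition mtm_run (R : realType) (n M : nat) (hM : (0 < M)%N)
  (fs : 'I_M -> 'rV[R]_n -> R) (h : 'rV[R]_n -> R) (d : 'rV[R]_n -> R)
  (nrm : 'rV[R]_n -> R) (Q : set 'rV[R]_n) (L0 : R) (x0 : 'rV[R]_n) (N : nat)
  (Lacc alpha A : nat -> R) (x y u : nat -> 'rV[R]_n) : Prop :=
  let Lstart k := if k is k'.+1 then Lacc k' / 2 else L0 / 2 in
  [/\ x 0%N = x0, u 0%N = x0, y 0%N = x0, A 0%N = 0 /\ alpha 0%N = 0 &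
   exists cnt : nat -> nat, forall k, (k < N)%N ->
     [/\ Lacc k = Lstart k * 2 ^+ cnt k,
         A k.+1 = A k + alpha k.+1,
         mtm_trial hM fs h d Q (Lacc k) (A k) (x k) (u k)
           (alpha k.+1) (y k.+1) (u k.+1) (x k.+1),
         mtm_accept hM fs h nrm (Lacc k) (y k.+1) (x k.+1)
       & forall j, (j < cnt k)%N ->
           exists a' y' u' x',
             mtm_trial hM fs h d Q (Lstart k * 2 ^+ j) (A k) (x k) (u k) a' y' u' x'
             /\ ~ mtm_accept hM fs h nrm (Lstart k * 2 ^+ j) y' x']].

(* Main.v *)
Require Import Defs.
From HB Require Import structures.
From mathcomp Require Import all_boot all_order all_algebra.
From mathcomp Require Import all_classical all_reals all_analysis.
Import Order.TTheory GRing.Theory Num.Theory.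
Import numFieldNormedType.Exports.
Local Open Scope classical_set_scope.
Local Open Scope ring_scope.
From mathcomp Require Import ring lra.
Set Implicit Arguments. Unset Strict Implicit. Unset Printing Implicit Defensive.

Lemma dir_lim (R : realType) n (g : 'rV[R]_n -> R) p v (c b : R) :
  differentiable g p ->
  (forall t : R, 0 < t -> t <= 1 -> c <= (g (t *: v + p) - g p) / t + b * t) ->
  c <= 'd g p v.
Proof.
move=> dg H.
have D := @diff_derivable _ _ _ g p v dg.
have /derivableP [cv dv] := D.
rewrite -deriveE //.
have C : (fun h : R => h^-1 *: ((g \o shift p) (h *: v) - g p)) @ 0^' --> 'D_v g p by [].
have C2 : (fun h : R => h^-1 *: ((g \o shift p) (h *: v) - g p)) @ 0^'+ --> 'D_v g p.
  apply: cvg_trans C; apply: cvg_app => P [e e0 He]; exists e => // x Hx x0.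
  by apply: He => //; rewrite gt_eqF.
have C3 : (fun h : R => h^-1 *: ((g \o shift p) (h *: v) - g p) + b * h) @ 0^'+ --> 'D_v g p + b * 0.
  apply: cvgD => //; apply: cvgMr; apply: cvg_at_right_filter; exact: cvg_id.
rewrite mulr0 addr0 in C3.
apply: (cvgr_to_ge C3); near=> h.
rewrite /= /shift -[_ *: (_ - _)]/(_ * _) [_^-1 * _]mulrC; apply: H.
- by near: h; exact: nbhs_right_gt.
- by near: h; apply: nbhs_right_le; exact: ltr01.
Unshelve. all: by end_near.
Qed.
Lemma diff_dotv (R : realType) n (g : 'rV[R]_n -> R) p v :
  'd g p v = dotv (grad g p) v.
Proof.
rewrite {1}(row_sum_delta v) linear_sum /dotv; apply: eq_bigr => j _.
by rewrite linearZ /= mxE mulrC.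
Qed.

Lemma line_derive (R : realType) n (g : 'rV[R]_n -> R) v w (t : R) :
  differentiable g (t *: v + w) ->
  is_derive t 1 (fun s : R => g (s *: v + w)) ('d g (t *: v + w) v).
Proof.
move=> dg.
have D := @diff_derivable _ _ _ g _ v dg.
have E : (fun h : R => h^-1 *: (((fun s : R => g (s *: v + w)) \o shift t) (h *: 1) - g (t *: v + w)))
   = (fun h : R => h^-1 *: ((g \o shift (t *: v + w)) (h *: v) - g (t *: v + w))).
  apply: funext => h /=; rewrite /shift /= scaler1 scalerDl addrA //.
have Dd : derivable (fun s : R => g (s *: v + w)) t 1.
  by rewrite /derivable E.
apply: DeriveDef => //.
by rewrite /derive E -deriveE.
Qed.
Section NormFacts.
Variables (R : realType) (n : nat) (nrm : 'rV[R]_n -> R).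
Hypothesis hn : is_norm nrm.

Lemma nrm0 : nrm 0 = 0.
Proof. by case: hn => _ hZ _; rewrite -(scale0r 0) hZ normr0 mul0r. Qed.

Lemma nrmN x : nrm (- x) = nrm x.
Proof. by case: hn => _ hZ _; rewrite -scaleN1r hZ normrN normr1 mul1r. Qed.

Lemma nrm_ge0 x : 0 <= nrm x.
Proof.
case: hn => _ _ hT; have := hT x (- x); rewrite subrr nrm0 nrmN.
lra.
Qed.

Lemma nrmB x y : nrm (x - y) = nrm (y - x).
Proof. by rewrite -nrmN opprB. Qed.

Lemma nrm_sum (I : finType) (F : I -> 'rV[R]_n) :
  nrm (\sum_i F i) <= \sum_i nrm (F i).
Proof.
case: hn => _ _ hT.
elim/big_ind2 : _ => [|a b c d ha hc|i _]; first by rewrite nrm0.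
- by apply: le_trans (hT _ _) _; exact: lerD.
- by [].
Qed.

Lemma entry_le_mx_norm (v : 'rV[R]_n) j : `|v 0 j| <= `|v|.
Proof.
have -> : `|v| = mx_norm v by [].
rewrite mx_normrE.
exact: (le_bigmax _ (fun ij : 'I_1 * 'I_n => `|v ij.1 ij.2|) (0, j)).
Qed.

Definition nrmC := \sum_(j < n) nrm (delta_mx 0 j).

Lemma nrm_le_C v : nrm v <= nrmC * `|v|.
Proof.
rewrite {1}(row_sum_delta v) /nrmC mulr_suml.
apply: (le_trans (nrm_sum _)); apply: ler_sum => j _.
case: hn => _ hZ _; rewrite hZ mulrC; apply: ler_wpM2l; first exact: nrm_ge0.
exact: entry_le_mx_norm.
Qed.

Lemma nrm_continuous : continuous nrm.
Proof.
move=> x; apply/(@cvgrPdist_le _ _ _ (nbhs x) (nbhs_filter x)) => e e0.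
have C0 : 0 <= nrmC by apply: sumr_ge0 => j _; exact: nrm_ge0.
have e1 : 0 < e / (nrmC + 1) by apply: divr_gt0 => //; lra.
near=> y.
have Hy : `|x - y| <= e / (nrmC + 1).
  near: y; apply: (@cvgr_dist_le _ _ _ _ (nbhs_filter x) id x cvg_id); exact: e1.
have H1 : nrm x <= nrm y + nrm (x - y).
  by case: hn => _ _ hT; rewrite -{1}(subrK y x) addrC hT.
have H2 : nrm y <= nrm x + nrm (x - y).
  by case: hn => _ _ hT; rewrite nrmB -{1}(subrK x y) addrC hT.
have H3 := nrm_le_C (x - y).
have H4 : nrmC * `|x - y| <= e.
  apply: le_trans (ler_wpM2l C0 Hy) _.
  rewrite mulrA ler_pdivrMr; last lra.
  have := normr_ge0 e; nra.
rewrite ler_norml; apply/andP; split; lra.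
Unshelve. all: by end_near.
Qed.


Lemma nrm_pos x : x != 0 -> 0 < nrm x.
Proof.
move=> x0; rewrite lt_def nrm_ge0 andbT; apply/eqP => h.
by case: hn => h0 _ _; move/eqP: x0; apply; exact: h0.
Qed.

Lemma nrm_equiv : exists2 c : R, 0 < c & forall v, c * `|v| <= nrm v.
Proof.
pose S := [set v : 'rV[R]_n | `|v| = 1].
have [[w Sw]|S0] := pselect (S !=set0); last first.
  exists 1 => // v; have [->|v0] := eqVneq v 0; first by rewrite normr0 mulr0 nrm_ge0.
  exfalso; apply: S0; exists (`|v|^-1 *: v); rewrite /S /= normrZ normrV ?unitfE ?normr_eq0 //.
  by rewrite normr_id mulVf // normr_eq0.
have cS : compact S.
  apply: bounded_closed_compact.
    exists 1; split => // M M1 v /= ->; exact: ltW.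
  apply: (@preimage_closed _ _ (fun v : 'rV[R]_n => `|v|) [set x : R | x = 1]); last exact: closed_eq.
  by move=> ? _; exact: norm_continuous.
have [c Sc cmin] := compact_EVT_min (ex_intro _ w Sw) cS (continuous_subspaceT (@nrm_continuous)).
have Sc' : `|c| = 1 by move: Sc; rewrite inE.
have c0 : c != 0 by apply/eqP => c0; move: Sc'; rewrite c0 normr0 => /eqP; rewrite eq_sym oner_eq0.
exists (nrm c); first exact: nrm_pos.
move=> v; have [->|v0] := eqVneq v 0; first by rewrite normr0 mulr0 nrm_ge0.
have nv : 0 < `|v| by rewrite normr_gt0.
have := cmin (`|v|^-1 *: v); rewrite inE /S /= normrZ normrV ?unitfE ?normr_eq0 // normr_id mulVf ?gt_eqF // => /(_ erefl).
case: hn => _ hZ _; rewrite hZ normrV ?unitfE ?normr_eq0 // normr_id.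
move=> H; rewrite -ler_pdivlMr // mulrC; exact: H.
Qed.

End NormFacts.
Lemma dotvZr (R : realType) n (a : R) (lam nu : 'rV[R]_n) : dotv lam (a *: nu) = a * dotv lam nu.
Proof. by rewrite /dotv mulr_sumr; apply: eq_bigr => j _; rewrite mxE mulrCA. Qed.
Lemma dotvDr (R : realType) n (lam nu mu : 'rV[R]_n) : dotv lam (nu + mu) = dotv lam nu + dotv lam mu.
Proof. by rewrite /dotv -big_split; apply: eq_bigr => j _; rewrite mxE mulrDr. Qed.
Lemma dotvNr (R : realType) n (lam nu : 'rV[R]_n) : dotv lam (- nu) = - dotv lam nu.
Proof. by rewrite -scaleN1r dotvZr mulN1r. Qed.
Lemma dotvBr (R : realType) n (lam nu mu : 'rV[R]_n) : dotv lam (nu - mu) = dotv lam nu - dotv lam mu.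
Proof. by rewrite dotvDr dotvNr. Qed.
Lemma dotvDl (R : realType) n (lam nu mu : 'rV[R]_n) : dotv (nu + mu) lam = dotv nu lam + dotv mu lam.
Proof. by rewrite /dotv -big_split; apply: eq_bigr => j _; rewrite mxE mulrDl. Qed.
Lemma dotvBl (R : realType) n (lam nu mu : 'rV[R]_n) : dotv (nu - mu) lam = dotv nu lam - dotv mu lam.
Proof. by rewrite /dotv -sumrB; apply: eq_bigr => j _; rewrite !mxE mulrBl. Qed.

Lemma dual_bound (R : realType) n (nrm : 'rV[R]_n -> R) (lam nu : 'rV[R]_n) :
  is_norm nrm -> dotv lam nu <= dual_norm nrm lam * nrm nu.
Proof.
move=> hn; have [c c0 hc] := nrm_equiv hn.
set S := [set dotv lam nu | nu in [set nu | nrm nu <= 1]].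
have hS : has_sup S.
  split; first by exists (dotv lam 0), 0 => //=; rewrite nrm0.
  exists ((\sum_j `|lam 0 j|) / c) => _ [w /= hw <-].
  have wc : `|w| <= c^-1.
    by rewrite -[c^-1]mul1r ler_pdivlMr // mulrC; apply: le_trans (hc w) hw.
  rewrite /dotv mulr_suml; apply: ler_sum => j _.
  apply: le_trans (ler_norm _) _; rewrite normrM; apply: ler_wpM2l => //.
  exact: le_trans (entry_le_mx_norm _ _) wc.
have [->|nu0] := eqVneq nu 0.
  rewrite (nrm0 hn) mulr0 /dotv big1 // => j _; by rewrite mxE mulr0.
have np := nrm_pos hn nu0.
have := sup_upper_bound hS; move/(_ (dotv lam ((nrm nu)^-1 *: nu))).
rewrite dotvZr -/(dual_norm nrm lam) => H.
rewrite -ler_pdivrMr // mulrC; apply: H; exists ((nrm nu)^-1 *: nu) => /=; last first.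
  by rewrite dotvZr.
case: (hn) => _ hZ _; rewrite hZ ger0_norm; [by rewrite mulVf // gt_eqF | by rewrite invr_ge0 ltW].
Qed.

Lemma dir_lim_up (R : realType) n (g : 'rV[R]_n -> R) p v (c b : R) :
  differentiable g p ->
  (forall t : R, 0 < t -> t <= 1 -> (g (t *: v + p) - g p) / t <= c + b * t) ->
  'd g p v <= c.
Proof.
move=> dg H.
have := @dir_lim R n (fun x => - g x) p v (- c) b.
have -> : 'd (fun x => - g x) p v = - 'd g p v.
  by rewrite diffN //.
rewrite lerN2; apply.
  exact: differentiableN.
move=> t t0 t1; have := H t t0 t1.
have -> : (- g (t *: v + p) - - g p) / t = - ((g (t *: v + p) - g p) / t).
  by rewrite -mulNr; congr (_ * _); ring.
lra.
Qed.

Lemma seg_eq (R : realType) n (u w : 'rV[R]_n) (t : R) :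
  t *: (u - w) + w = t *: u + (1 - t) *: w.
Proof. by rewrite scalerBr scalerBl scale1r -!addrA [- _ + w]addrC. Qed.

Lemma bregman_ge (R : realType) n (nrm : 'rV[R]_n -> R) Q d u w :
  prox_function nrm Q d -> Q u -> Q w ->
  nrm (u - w) ^+ 2 / 2 <= bregman d u w.
Proof.
move=> [dd _ sc] Qu Qw.
set N := nrm (u - w) ^+ 2.
have := @dir_lim_up R n d w (u - w) (d u - d w - N / 2) (N / 2) (dd w Qw).
rewrite diff_dotv /bregman => H.
suff : dotv (grad d w) (u - w) <= d u - d w - N / 2 by lra.
apply: H => t t0 t1.
rewrite seg_eq ler_pdivrMr //.
have := sc u w t Qu Qw; rewrite t1 ltW //= => /(_ isT).
rewrite -/N; nra.
Qed.

Lemma convex_grad (R : realType) n Q (f : 'rV[R]_n -> R) z w :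
  convex_fun_on Q f -> differentiable f w -> Q z -> Q w ->
  f w + dotv (grad f w) (z - w) <= f z.
Proof.
move=> cf df Qz Qw.
have := @dir_lim_up R n f w (z - w) (f z - f w) 0 df.
rewrite diff_dotv => H.
suff : dotv (grad f w) (z - w) <= f z - f w by lra.
apply: H => t t0 t1.
rewrite seg_eq ler_pdivrMr // mul0r addr0.
have := cf z w t Qz Qw; rewrite t1 ltW //= => /(_ isT).
nra.
Qed.

Lemma tp_alg (R : realType) (du duk dz Gz Gu W Y Z V : R) :
  V = Gz + Gu -> Gz - (Z - Y) <= W ->
  du - duk - Gu + Y + (dz - du - W) <= dz - duk - V + Z.
Proof. lra. Qed.

Lemma three_point (R : realType) n (nrm : 'rV[R]_n -> R) Q d (psi : 'rV[R]_n -> R)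
  (a : R) u uk z :
  convexR_set Q -> prox_function nrm Q d -> convex_fun_on Q psi -> 0 <= a ->
  Q u -> Q uk -> Q z ->
  (forall z, Q z -> bregman d u uk + a * psi u <= bregman d z uk + a * psi z) ->
  bregman d u uk + a * psi u + bregman d z u <= bregman d z uk + a * psi z.
Proof.
move=> cQ [dd _ _] cpsi a0 Qu Quk Qz hmin.
set gk := grad d uk; set gu := grad d u.
set Gz := dotv gk (z - u); set Gu := dotv gk (u - uk).
have Ezuk : dotv gk (z - uk) = Gz + Gu.
  by rewrite -dotvDr addrA subrK.
have := @dir_lim R n d u (z - u) (Gz - a * (psi z - psi u)) 0 (dd u Qu).
rewrite diff_dotv -/gu => H.
have key : Gz - a * (psi z - psi u) <= dotv gu (z - u).
  apply: H => t t0 t1.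
  rewrite mul0r addr0 ler_pdivlMr //.
  set zt := t *: (z - u) + u.
  have Qzt : Q zt by rewrite /zt seg_eq; apply: cQ => //; rewrite t1 ltW.
  have E2 : dotv gk (zt - uk) = t * Gz + Gu.
    by rewrite /zt -addrA dotvDr dotvZr.
  have m := hmin zt Qzt; rewrite /bregman -/gk E2 in m.
  have cv : psi zt <= t * psi z + (1 - t) * psi u.
    by rewrite /zt seg_eq; apply: cpsi => //; rewrite t1 ltW.
  have cva : a * psi zt <= a * (t * psi z + (1 - t) * psi u) by exact: ler_wpM2l.
  rewrite -/Gu in m.
  have -> : (Gz - a * (psi z - psi u)) * t = t * Gz - (a * (t * psi z + (1 - t) * psi u) - a * psi u) by ring.
  move: m cva.
  generalize (a * (t * psi z + (1 - t) * psi u)) (a * psi zt) (a * psi u) (t * Gz) (d zt) (d u) (d uk) Gu.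
  move=> X Y Z W D1 D2 D3 G1. lra.
rewrite mulrBr in key.
rewrite /bregman; exact: (@tp_alg _ _ _ _ _ _ _ _ _ _ Ezuk key).
Qed.

Lemma poly_derive (R : realType) (G K s : R) :
  is_derive s 1 (fun t : R => G * t + K * (t * t)) (G + K * (s + s)).
Proof.
have H1 : is_derive s 1 (G \*: (@id R)) (G *: 1) by apply: is_deriveZ.
have H2 : is_derive s 1 ((@id R) * (@id R)) (s *: 1 + s *: 1) by apply: is_deriveM.
have H3 : is_derive s 1 (K \*: ((@id R) * (@id R))) (K *: (s *: 1 + s *: 1)) by apply: is_deriveZ.
have H4 := is_deriveD H1 H3.
have E : (fun t : R => G * t + K * (t * t)) = (G \*: (@id R) + K \*: ((@id R) * (@id R))).
  by apply: funext.
rewrite E; apply: (is_derive_eq H4).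
by rewrite /GRing.scale /= !mulr1.
Qed.

Lemma dotv_split (R : realType) n (a b v : 'rV[R]_n) :
  dotv a v = dotv b v + dotv (a - b) v.
Proof. by rewrite dotvBl addrCA subrr addr0. Qed.

Lemma hd_alg (R : realType) (G X D L c N : R) :
  X <= D * N -> D * N <= L * (c * N) * N ->
  G + X - (G + L / 2 * N ^+ 2 * (c + c)) <= 0.
Proof.
move=> h1 h2.
have e : L / 2 * N ^+ 2 * (c + c) = L * (c * N) * N.
  by rewrite expr2; field.
rewrite e; lra.
Qed.

Lemma descent (R : realType) n (nrm : 'rV[R]_n -> R) Q (f : 'rV[R]_n -> R) (L : R) z w :
  is_norm nrm -> convexR_set Q -> (forall z, Q z -> differentiable f z) ->
  (forall z w, Q z -> Q w -> dual_norm nrm (grad f z - grad f w) <= L * nrm (z - w)) ->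
  Q z -> Q w ->
  f z <= f w + dotv (grad f w) (z - w) + L / 2 * nrm (z - w) ^+ 2.
Proof.
move=> hn cQ df hL Qz Qw.
set v := z - w.
set G := dotv (grad f w) v.
set K := L / 2 * nrm v ^+ 2.
have Qs : forall s : R, 0 <= s <= 1 -> Q (s *: v + w).
  move=> s /andP[s0 s1]; rewrite /v seg_eq; apply: cQ => //; exact/andP.
pose F := fun s : R => f (s *: v + w) - (G * s + K * (s * s)).
pose dF := fun s : R => 'd f (s *: v + w) v - (G + K * (s + s)).
have DF : forall s : R, 0 <= s <= 1 -> is_derive s 1 F (dF s).
  move=> s hs.
  have H1 := line_derive (df _ (Qs s hs)).
  have H2 := poly_derive G K s.
  have := is_deriveB H1 H2.
  by [].
have [c c01 Hc] : exists2 c, c \in `]0, 1[%R & F 1 - F 0 = dF c * (1 - 0).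
  apply: MVT => //.
    move=> x; rewrite in_itv /= => /andP[x0 x1]; apply: DF; rewrite !ltW //.
  apply: continuous_in_subspaceT => x; rewrite inE /= in_itv /= => hx.
  have := DF x hx => /(@ex_derive _ _ _ _ _ _ _) /derivable1_diffP.
  exact: differentiable_continuous.
move: c01; rewrite in_itv /= => /andP[c0 c1].
have Qc : Q (c *: v + w) by apply: Qs; rewrite !ltW.
have Hd : dF c <= 0.
  rewrite /dF. rewrite diff_dotv.
  have E := dotv_split (grad f (c *: v + w)) (grad f w) v.
  rewrite E.
  have B1 := dual_bound (grad f (c *: v + w) - grad f w) v hn.
  have B2 := hL _ _ Qc Qw.
  have nE : nrm (c *: v + w - w) = c * nrm v.
    by rewrite addrK; case: hn => _ hZ _; rewrite hZ ger0_norm // ltW.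
  rewrite nE in B2.
  have nv0 : 0 <= nrm v := nrm_ge0 hn v.
  have B3 := ler_wpM2r nv0 B2.
  rewrite /G /K; exact: (@hd_alg _ _ _ _ _ _ _ B1 B3).
have F1 : F 1 = f z - (G + K).
  by rewrite /F scale1r /v subrK !mulr1.
have F0 : F 0 = f w.
  by rewrite /F scale0r add0r mulr0 mul0r mulr0 addr0 subr0.
have : F 1 - F 0 <= 0 by rewrite Hc subr0 mulr1.
rewrite F1 F0; lra.
Qed.

Lemma le_fmax (R : realType) M (hM : (0 < M)%N) (g : 'I_M -> R) i : g i <= fmax hM g.
Proof. exact: (le_bigmax _ g i). Qed.

Lemma fmax_le (R : realType) M (hM : (0 < M)%N) (g : 'I_M -> R) c :
  (forall i, g i <= c) -> fmax hM g <= c.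
Proof. by move=> H; apply: bigmax_le => // i _. Qed.

Lemma comb_sub (R : realType) n (z1 z2 y : 'rV[R]_n) (t : R) :
  t *: z1 + (1 - t) *: z2 - y = t *: (z1 - y) + (1 - t) *: (z2 - y).
Proof.
have ey : y = t *: y + (1 - t) *: y by rewrite -scalerDl addrC subrK scale1r.
by rewrite !scalerBr {1}ey opprD addrACA.
Qed.

Lemma lin_model_convex (R : realType) n M (hM : (0 < M)%N) (fs : 'I_M -> 'rV[R]_n -> R) y z1 z2 (t : R) :
  0 <= t <= 1 ->
  lin_model hM fs y (t *: z1 + (1 - t) *: z2) <= t * lin_model hM fs y z1 + (1 - t) * lin_model hM fs y z2.
Proof.
move=> /andP[t0 t1]; apply: fmax_le => j.
rewrite comb_sub dotvDr !dotvZr.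
have h1 := le_fmax hM (fun j => fs j y + dotv (grad (fs j) y) (z1 - y)) j.
have h2 := le_fmax hM (fun j => fs j y + dotv (grad (fs j) y) (z2 - y)) j.
rewrite /lin_model.
set l1 := fmax _ _ in h1 *; set l2 := fmax _ _ in h2 *.
have t0' : 0 <= 1 - t by lra.
have e1 := ler_wpM2l t0 h1; have e2 := ler_wpM2l t0' h2.
simpl in e1, e2.
have -> : fs j y + (t * dotv (grad (fs j) y) (z1 - y) + (1 - t) * dotv (grad (fs j) y) (z2 - y))
  = t * (fs j y + dotv (grad (fs j) y) (z1 - y)) + (1 - t) * (fs j y + dotv (grad (fs j) y) (z2 - y)) by ring.
exact: lerD.
Qed.

Lemma psi_convex (R : realType) n M (hM : (0 < M)%N) (fs : 'I_M -> 'rV[R]_n -> R) h Q y :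
  convex_fun_on Q h -> convex_fun_on Q (fun z => lin_model hM fs y z + h z).
Proof.
move=> ch z1 z2 t Q1 Q2 ht.
have := lin_model_convex hM fs y z1 z2 ht.
have := ch z1 z2 t Q1 Q2 ht.
lra.
Qed.

Lemma comb_eq (R : realType) n (Ak a : R) (p q : 'rV[R]_n) :
  Ak + a != 0 ->
  (Ak + a)^-1 *: (a *: p + Ak *: q) = (a / (Ak + a)) *: p + (1 - a / (Ak + a)) *: q.
Proof.
move=> h; rewrite scalerDr !scalerA; congr (_ + _); first by rewrite mulrC.
congr (_ *: _); field; exact: h.
Qed.


Lemma root_pos (R : realType) (Lc Ak a : R) :
  0 < Lc -> 0 <= Ak ->
  (Ak + a = Lc * a ^+ 2 /\ (forall b : R, Ak + b = Lc * b ^+ 2 -> b <= a)) -> 0 < a.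
Proof.
move=> L0 A0 [_ amax].
set s := Num.sqrt (1 + 4 * Lc * Ak).
have s0 : 0 <= s := sqrtr_ge0 _.
have s2 : s ^+ 2 = 1 + 4 * Lc * Ak.
  rewrite sqr_sqrtr //; have := mulr_ge0 (ltW L0) A0; lra.
set b0 := (1 + s) / (2 * Lc).
have b0p : 0 < b0 by apply: divr_gt0; lra.
apply: lt_le_trans b0p (amax b0 _).
have e : Lc * b0 ^+ 2 - b0 - Ak = (s ^+ 2 - 1 - 4 * Lc * Ak) / (4 * Lc).
  rewrite /b0; field; lra.
rewrite s2 in e.
have : Lc * b0 ^+ 2 - b0 - Ak = 0 by rewrite e; field; lra.
lra.
Qed.

Lemma trial_facts (R : realType) n M (hM : (0 < M)%N) (fs : 'I_M -> 'rV[R]_n -> R) h d Q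
  (Lc Ak : R) xk uk a y u x :
  convexR_set Q -> Q xk -> Q uk -> 0 <= Ak -> 0 < Lc ->
  mtm_trial hM fs h d Q Lc Ak xk uk a y u x ->
  [/\ 0 < a, Q y, Q u & Q x].
Proof.
move=> cQ Qxk Quk A0 L0 [ha ey [Qu umin] ex].
have a0 := root_pos L0 A0 ha.
have A1 : Ak + a != 0 by rewrite gt_eqF //; lra.
have t01 : 0 <= a / (Ak + a) <= 1.
  apply/andP; split; first by apply: divr_ge0; lra.
  by rewrite ler_pdivrMr ?mul1r; lra.
split => //.
- by rewrite ey comb_eq //; apply: cQ.
- by rewrite ex comb_eq //; apply: cQ.
Qed.

Lemma accept_ge (R : realType) n M (hM : (0 < M)%N) (nrm : 'rV[R]_n -> R)
  (fs : 'I_M -> 'rV[R]_n -> R) h d Q (L Lc Ak : R) xk uk a y u x :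
  is_norm nrm -> convexR_set Q ->
  (forall i z, Q z -> differentiable (fs i) z) ->
  (forall i z w, Q z -> Q w ->
     dual_norm nrm (grad (fs i) z - grad (fs i) w) <= L * nrm (z - w)) ->
  Q xk -> Q uk -> 0 <= Ak -> 0 < Lc -> L <= Lc ->
  mtm_trial hM fs h d Q Lc Ak xk uk a y u x ->
  mtm_accept hM fs h nrm Lc y x.
Proof.
move=> hn cQ df hL Qxk Quk A0 L0 LL tr.
have [_ Qy _ Qx] := trial_facts cQ Qxk Quk A0 L0 tr.
rewrite /mtm_accept /fobj; apply: lerD => //.
have N0 : 0 <= nrm (x - y) ^+ 2 by apply: exprn_ge0; exact: nrm_ge0.
have LN : L / 2 * nrm (x - y) ^+ 2 <= Lc / 2 * nrm (x - y) ^+ 2.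
  by apply: ler_wpM2r => //; lra.
apply: fmax_le => i.
have D := descent hn cQ (df i) (hL i) Qx Qy.
have := le_fmax hM (fun j => fs j y + dotv (grad (fs j) y) (x - y)) i.
rewrite /lin_model.
move: D LN; generalize (fs i x) (fs i y + dotv (grad (fs i) y) (x - y)) (L / 2 * nrm (x - y) ^+ 2).
move=> X Y Z; rewrite -/(lin_model hM fs y x).
move=> D LN LY; lra.
Qed.

Lemma Lc_bound (R : realType) n M (hM : (0 < M)%N) (nrm : 'rV[R]_n -> R)
  (fs : 'I_M -> 'rV[R]_n -> R) h d Q (L Ls Ak : R) xk uk (cnt : nat) :
  is_norm nrm -> convexR_set Q ->
  (forall i z, Q z -> differentiable (fs i) z) ->
  (forall i z w, Q z -> Q w ->
     dual_norm nrm (grad (fs i) z - grad (fs i) w) <= L * nrm (z - w)) ->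
  Q xk -> Q uk -> 0 <= Ak -> 0 < Ls -> Ls <= L ->
  (forall j, (j < cnt)%N ->
           exists a' y' u' x',
             mtm_trial hM fs h d Q (Ls * 2 ^+ j) Ak xk uk a' y' u' x'
             /\ ~ mtm_accept hM fs h nrm (Ls * 2 ^+ j) y' x') ->
  Ls * 2 ^+ cnt <= 2 * L.
Proof.
move=> hn cQ df hL Qxk Quk A0 L0 LL rej.
case: cnt rej => [|j] rej; first by rewrite expr0 mulr1; lra.
have [a' [y' [u' [x' [tr nacc]]]]] := rej j (ltnSn j).
have p0 : 0 < Ls * 2 ^+ j by apply: mulr_gt0 => //; apply: exprn_gt0.
have lt : Ls * 2 ^+ j < L.
  rewrite ltNge; apply/negP => ge; apply: nacc.
  exact: (accept_ge hn cQ df hL Qxk Quk A0 p0 ge tr).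
by rewrite exprS mulrCA; lra.
Qed.


Lemma psi_le_fobj (R : realType) n M (hM : (0 < M)%N) (fs : 'I_M -> 'rV[R]_n -> R) h Q y z :
  (forall i, convex_fun_on Q (fs i)) -> (forall i z, Q z -> differentiable (fs i) z) ->
  Q y -> Q z -> lin_model hM fs y z + h z <= fobj hM fs h z.
Proof.
move=> cf df Qy Qz; rewrite /fobj; apply: lerD => //.
apply: fmax_le => i.
apply: le_trans (le_fmax hM (fun i => fs i z) i).
exact: (convex_grad (cf i) (df i y Qy) Qz Qy).
Qed.

Lemma diff_xy (R : realType) n (Ak a : R) (u uk xk : 'rV[R]_n) :
  (Ak + a)^-1 *: (a *: u + Ak *: xk) - (Ak + a)^-1 *: (a *: uk + Ak *: xk)
  = ((Ak + a)^-1 * a) *: (u - uk).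
Proof.
by rewrite -scalerBr opprD addrACA subrr addr0 -scalerBr scalerA.
Qed.

Lemma step_alg (R : realType) (Ak a A1 Lc Fx Fxk Fs px pu pxk ps Vu Vsuk Vsu nu : R) :
  0 <= Ak -> 0 < a -> A1 = Ak + a -> A1 = Lc * a ^+ 2 ->
  Fx <= px + Lc / 2 * (A1^-1 * a * nu) ^+ 2 ->
  px <= a / A1 * pu + (1 - a / A1) * pxk ->
  pxk <= Fxk -> ps <= Fs ->
  Vu + a * pu + Vsu <= Vsuk + a * ps ->
  nu ^+ 2 / 2 <= Vu ->
  A1 * Fx - Ak * Fxk <= a * Fs + Vsuk - Vsu.
Proof.
move=> Ak0 a0 eA eL h1 h2 h3 h4 h5 h6.
have A0 : 0 < A1 by rewrite eA; lra.
have An : A1 != 0 by rewrite gt_eqF.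
have k1 : A1 * Fx <= A1 * px + nu ^+ 2 / 2.
  have e : A1 * (Lc / 2 * (A1^-1 * a * nu) ^+ 2) = (Lc * a ^+ 2) / A1 * nu ^+ 2 / 2.
    by field.
  rewrite -eL divff // mul1r in e.
  by apply: le_trans (ler_wpM2l (ltW A0) h1) _; rewrite mulrDr e.
have k2 : A1 * px <= a * pu + Ak * pxk.
  have e : A1 * (a / A1 * pu + (1 - a / A1) * pxk) = a * pu + (A1 - a) * pxk by field.
  have -> : Ak = A1 - a by rewrite eA; ring.
  by apply: le_trans (ler_wpM2l (ltW A0) h2) _; rewrite e.
have k3 : Ak * pxk <= Ak * Fxk by exact: ler_wpM2l.
have k4 : a * ps <= a * Fs by apply: ler_wpM2l => //; exact: ltW.
move: k1 k2 k3 k4 h5 h6.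
generalize (A1 * Fx) (A1 * px) (a * pu) (Ak * pxk) (Ak * Fxk) (a * ps) (a * Fs) (nu ^+ 2 / 2).
move=> X1 X2 X3 X4 X5 X6 X7 X8; lra.
Qed.

Lemma step_ineq (R : realType) n M (hM : (0 < M)%N) (nrm : 'rV[R]_n -> R)
  (fs : 'I_M -> 'rV[R]_n -> R) h d Q xstar (Lc Ak : R) xk uk a y u x :
  is_norm nrm -> convexR_set Q -> (forall i, convex_fun_on Q (fs i)) ->
  (forall i z, Q z -> differentiable (fs i) z) -> convex_fun_on Q h ->
  prox_function nrm Q d -> Q xstar ->
  Q xk -> Q uk -> 0 <= Ak -> 0 < Lc ->
  mtm_trial hM fs h d Q Lc Ak xk uk a y u x -> mtm_accept hM fs h nrm Lc y x ->
  (Ak + a) * fobj hM fs h x - Ak * fobj hM fs h xk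
    <= a * fobj hM fs h xstar + bregman d xstar uk - bregman d xstar u.
Proof.
move=> hn cQ cf df ch pd Qs Qxk Quk A0 L0 tr acc.
have [a0 Qy Qu Qx] := trial_facts cQ Qxk Quk A0 L0 tr.
case: tr => [[eq amax] ey [_ umin] ex].
have An : Ak + a != 0 by rewrite gt_eqF //; lra.
have t01 : 0 <= a / (Ak + a) <= 1.
  apply/andP; split; first by apply: divr_ge0; lra.
  by rewrite ler_pdivrMr ?mul1r; lra.
have cpsi := psi_convex hM fs y ch.
have nxy : nrm (x - y) = (Ak + a)^-1 * a * nrm (u - uk).
  rewrite ex ey diff_xy; case: (hn) => _ hZ _; rewrite hZ ger0_norm //.
  by apply: mulr_ge0; [rewrite invr_ge0|]; lra.
apply: (@step_alg R Ak a (Ak + a) Lc (fobj hM fs h x) (fobj hM fs h xk) (fobj hM fs h xstar)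
  (lin_model hM fs y x + h x) (lin_model hM fs y u + h u) (lin_model hM fs y xk + h xk)
  (lin_model hM fs y xstar + h xstar) (bregman d u uk) (bregman d xstar uk) (bregman d xstar u)
  (nrm (u - uk))).
- exact: A0.
- exact: a0.
- by [].
- exact: eq.
- rewrite -nxy; move: acc; rewrite /mtm_accept; lra.
- have := cpsi u xk (a / (Ak + a)) Qu Qxk t01.
  by rewrite -comb_eq // -ex.
- exact: psi_le_fobj.
- exact: psi_le_fobj.
- exact: (three_point cQ pd cpsi (ltW a0) Qu Quk Qs umin).
- exact: (bregman_ge pd Qu Quk).
Qed.


Lemma grow_core (R : realType) (al be m : R) :
  1 <= m -> 0 < al -> m ^+ 2 <= be -> 4 * (be + al) <= al ^+ 2 -> (m + 1) ^+ 2 <= be + al.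
Proof.
move=> m1 a0 hb hq; rewrite leNgt; apply/negP => H.
have ha : al < 2 * m + 1.
  have : (m + 1) ^+ 2 = m ^+ 2 + 2 * m + 1 by ring.
  lra.
have q : al * al < (2 * m + 1) * al by rewrite ltr_pM2r.
have k : 4 * m ^+ 2 < (2 * m - 3) * al.
  have e1 : (2 * m + 1) * al = 2 * (m * al) + al by ring.
  have e2 : (2 * m - 3) * al = 2 * (m * al) - 3 * al by ring.
  rewrite e2; rewrite e1 -expr2 in q; lra.
have m2 : 0 < m ^+ 2 by apply: exprn_gt0; lra.
case: (lerP (2 * m - 3) 0) => hs.
  have : (2 * m - 3) * al <= 0 by apply: mulr_le0_ge0 => //; exact: ltW.
  lra.
have : (2 * m - 3) * al < (2 * m - 3) * (2 * m + 1) by rewrite ltr_pM2l.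
have : (2 * m - 3) * (2 * m + 1) = 4 * m ^+ 2 - 4 * m - 3 by ring.
lra.
Qed.

Lemma growth (R : realType) (L Lc Ak a m : R) :
  0 < L -> 0 < Lc -> Lc <= 2 * L -> 0 < a -> Ak + a = Lc * a ^+ 2 ->
  1 <= m -> m ^+ 2 <= 8 * L * Ak -> (m + 1) ^+ 2 <= 8 * L * (Ak + a).
Proof.
move=> L0 Lc0 LL a0 eq m1 hm.
have q : 4 * (8 * L * Ak + 8 * L * a) <= (8 * L * a) ^+ 2.
  have h1 : Ak + a <= 2 * L * a ^+ 2.
    rewrite eq; apply: ler_wpM2r => //; exact: exprn_ge0 (ltW a0).
  have p : 0 <= 32 * L by lra.
  have h2 := ler_wpM2l p h1.
  have e1 : (8 * L * a) ^+ 2 = 32 * L * (2 * L * a ^+ 2) by ring.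
  have e2 : 4 * (8 * L * Ak + 8 * L * a) = 32 * L * (Ak + a) by ring.
  by rewrite e1 e2.
have := grow_core m1 (mulr_gt0 (mulr_gt0 _ L0) a0) hm q.
rewrite mulrDr; apply; lra.
Qed.


Lemma final_alg (R : realType) (D A P L Rad : R) :
  0 < P -> 0 < L -> A * D <= Rad ^+ 2 -> P <= 8 * L * A ->
  D <= 8 * L * Rad ^+ 2 / P.
Proof.
move=> P0 L0 h1 h2; rewrite ler_pdivlMr //.
case: (lerP D 0) => hD.
  have : D * P <= 0 by apply: mulr_le0_ge0 => //; exact: ltW.
  have : 0 <= 8 * L * Rad ^+ 2 by apply: mulr_ge0; [lra | exact: sqr_ge0].
  lra.
have k1 : D * P <= D * (8 * L * A) by apply: ler_wpM2l => //; exact: ltW.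
have k2 : 8 * L * (A * D) <= 8 * L * Rad ^+ 2 by apply: ler_wpM2l => //; lra.
have e : D * (8 * L * A) = 8 * L * (A * D) by ring.
lra.
Qed.

Unset Implicit Arguments.

Theorem theorem2 (R : realType) (n M : nat) (hM : (0 < M)%N)
  (nrm : 'rV[R]_n -> R) (Q : set 'rV[R]_n)
  (fs : 'I_M -> 'rV[R]_n -> R) (h : 'rV[R]_n -> R) (L : R)
  (d : 'rV[R]_n -> R) (xstar x0 : 'rV[R]_n) (Rad L0 : R) (N : nat)
  (Lacc alpha A : nat -> R) (x y u : nat -> 'rV[R]_n) :
  is_norm nrm ->
  closed Q -> convexR_set Q ->
  (forall i, convex_fun_on Q (fs i)) ->
  (forall i z, Q z -> differentiable (fs i) z) ->
  (forall i z w, Q z -> Q w ->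
     dual_norm nrm (grad (fs i) z - grad (fs i) w) <= L * nrm (z - w)) ->
  convex_fun_on Q h ->
  Q xstar -> (forall z, Q z -> fobj hM fs h xstar <= fobj hM fs h z) ->
  prox_function nrm Q d ->
  Q x0 -> bregman d xstar x0 <= Rad ^+ 2 ->
  (1 <= N)%N -> 0 < L0 -> L0 <= L ->
  mtm_run hM fs h d nrm Q L0 x0 N Lacc alpha A x y u ->
  fobj hM fs h (x N) - fobj hM fs h xstar <= 8 * L * Rad ^+ 2 / (N.+1)%:R ^+ 2.
Proof.
move=> hn clQ cQ cf df hL ch Qs opt pd Qx0 hR N1 L00 L0L run.
have Lp : 0 < L by lra.
case: run => hx0 hu0 hy0 [hA0 hal0] [cnt Hk].
pose Ls k := if k is k'.+1 then Lacc k' / 2 else L0 / 2.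
set F := fobj hM fs h.
set V0 := bregman d xstar x0.
have inv : forall k, (k <= N)%N ->
  [/\ Q (x k), Q (u k), 0 <= A k, 0 < Ls k /\ Ls k <= L &
      A k * (F (x k) - F xstar) <= V0 - bregman d xstar (u k)
    /\ ((1 <= k)%N -> (k.+1)%:R ^+ 2 <= 8 * L * A k)].
  elim => [_ | k IH hk].
    rewrite hx0 hu0 hA0 mul0r subrr; split => //; split => /=; lra.
  have hk' : (k < N)%N by [].
  have [Qxk Quk Ak0 [Ls0 LsL] [Ik Gk]] := IH (ltnW hk).
  have [HL HA Htr Hacc Hrej] := Hk k hk'.
  have Lc0 : 0 < Lacc k by rewrite HL; apply: mulr_gt0 => //; exact: exprn_gt0.
  have Lc2 : Lacc k <= 2 * L.
    by rewrite HL; exact: (Lc_bound hn cQ df hL Qxk Quk Ak0 Ls0 LsL Hrej).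
  have [a0 _ Qu1 Qx1] := trial_facts cQ Qxk Quk Ak0 Lc0 Htr.
  have St := step_ineq hn cQ cf df ch pd Qs Qxk Quk Ak0 Lc0 Htr Hacc.
  have Heq : A k + alpha k.+1 = Lacc k * alpha k.+1 ^+ 2 by case: Htr => [[]].
  split => //.
  - by rewrite HA; lra.
  - by split => /=; lra.
  split.
    rewrite HA.
    have e : (A k + alpha k.+1) * (F (x k.+1) - F xstar) =
      ((A k + alpha k.+1) * F (x k.+1) - A k * F (x k)) + A k * (F (x k) - F xstar)
       - alpha k.+1 * F xstar by ring.
    rewrite e; rewrite -/F in St; lra.
  move=> _; rewrite HA.
  case: k IH hk hk' Qxk Quk Ak0 Ls0 LsL Ik Gk HL HA Htr Hacc Hrej Lc0 Lc2 a0 Qu1 Qx1 St Heq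
    => [|k] IH hk hk' Qxk Quk Ak0 Ls0 LsL Ik Gk HL HA Htr Hacc Hrej Lc0 Lc2 a0 Qu1 Qx1 St Heq.
    rewrite hA0 add0r in Heq *.
    have e1 : 1 = Lacc 0 * alpha 1.
      apply: (mulIf (lt0r_neq0 a0)); rewrite mul1r {1}Heq; ring.
    have : 4 <= 8 * L * alpha 1.
      have := ler_wpM2r (ltW a0) Lc2; rewrite -e1; lra.
    by rewrite expr2 -natrM.
  have G1 := Gk isT.
  have m1 : 1 <= (k.+2)%:R :> R by rewrite ler1n.
  have := growth Lp Lc0 Lc2 a0 Heq m1 G1.
  by rewrite natr1.
have [_ QuN _ _ [IN GN]] := inv N (leqnn N).
have VN := bregman_ge pd Qs QuN.
have N0 : 0 <= nrm (xstar - u N) ^+ 2 / 2.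
  by apply: divr_ge0 => //; apply: exprn_ge0; exact: nrm_ge0.
have P0 : 0 < (N.+1)%:R ^+ 2 :> R by apply: exprn_gt0; rewrite ltr0Sn.
apply: (final_alg P0 Lp _ (GN N1)).
rewrite mulrC; rewrite -/V0 in hR; lra.
Qed.
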